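(* For every simple game $v$ on $n\ge 2$ players and every player $i$ that is not a dictator in $v$, we have $\mathrm{PGI}_i(v)\le\frac12$ and $\mathrm{DP}_i(v)\le\frac12$.
   Context: A simple game on $N=\{1,\dots,n\}$ is a surjective, monotone map $v\colon 2^N\to\{0,1\}$. A coalition $S$ is winning if $v(S)=1$; it is minimal winning if it is winning and all proper subsets are losing. Player $j$ is a null player if $v(S)=v(S\cup\{j\})$ for all $S\subseteq N\setminus\{j\}$; player $i$ is a dictator if $v(\{i\})=1$ and all other players are null players. Public Good index: $\mathrm{PGI}_i(v)=m_i/\sum_{j\in N}m_j$, where $m_j$ is the number of minimal winning coalitions containing $j$. Deegan–Packel index: $\mathrm{DP}_i(v)=d_i/\sum_{j\in N}d_j$, where $d_j=\sum_{S\ni j,\ S\text{ minimal winning}}\frac{1}{|S|}$. *)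

(* Defs.v *)
From HB Require Import structures.
From mathcomp Require Import all_boot all_order all_algebra.
Set Implicit Arguments. Unset Strict Implicit. Unset Printing Implicit Defensive.
Import Order.TTheory GRing.Theory Num.Theory.

Section Games.
Variable n : nat.
Implicit Types (v : {set 'I_n} -> bool) (S T : {set 'I_n}) (i j : 'I_n).

Definition surjective_game v : Prop :=
  (exists S, v S = true) /\ (exists S, v S = false).

Definition monotone_game v : Prop :=
  forall S T, S \subset T -> v S -> v T.

Definition simple_game v : Prop := surjective_game v /\ monotone_game v.

Definition winning v S : bool := v S.

Definition minimal_winning v S : bool :=
  v S && [forall T : {set 'I_n}, (T \proper S) ==> ~~ v T].

Definition null_player v j : Prop :=
  forall S, j \notin S -> v S = v (j |: S).

Definition dictator v i : Prop :=
  v [set i] /\ forall j, j != i -> null_player v j.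

Definition mwc_count v j : nat :=
  #|[set S : {set 'I_n} | minimal_winning v S & j \in S]|.

Definition PGI v i : rat :=
  (mwc_count v i)%:R / (\sum_(j < n) mwc_count v j)%:R.

Definition dp_weight v j : rat :=
  \sum_(S : {set 'I_n} | minimal_winning v S && (j \in S)) (#|S|%:R)^-1.

Definition DP v i : rat := dp_weight v i / \sum_(j < n) dp_weight v j.

End Games.

(* Main.v *)
Require Import Defs.
From HB Require Import structures.
From mathcomp Require Import all_boot all_order all_algebra.
Import Order.TTheory GRing.Theory Num.Theory.
Local Open Scope ring_scope.

Lemma key_sum (I : finType) (P : pred I) (F G : I -> rat) (x : I) :
  (forall S, P S -> S != x -> F S <= G S) ->
  (P x -> exists2 T, P T & (T != x) /\ F x + F T <= G x + G T) ->
  \sum_(S | P S) F S <= \sum_(S | P S) G S.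
Proof.
move=> H1 H2; case Px: (P x); last first.
  by apply: ler_sum => S PS; apply: H1 => //; apply/eqP => e; rewrite -e PS in Px.
have [T PT [Tx HT]] := H2 Px.
have PTx : P T && (T != x) by rewrite PT Tx.
rewrite (bigD1 x) //= [X in _ <= X](bigD1 x) //=.
rewrite (bigD1 T PTx) /= [X in _ <= _ + X](bigD1 T PTx) /=.
rewrite !addrA; apply: lerD => //.
apply: ler_sum => S /andP [/andP [PS Sx] _]; exact: H1.
Qed.

Lemma card_cond (T : finType) (P Q : pred T) :
  #|[set S | P S & Q S]| = (\sum_(S | P S) (Q S : nat))%N.
Proof.
rewrite -sum1_card.
rewrite (eq_bigl (fun S => P S && Q S)); last by move=> S; rewrite inE.
by rewrite big_mkcondr /=; apply: eq_bigr => S _; case: (Q S).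
Qed.

Lemma sum_in (n : nat) (S : {set 'I_n}) : (\sum_(j < n) (j \in S))%N = #|S|.
Proof.
by rewrite -sum1_card [RHS]big_mkcond /=; apply: eq_bigr => j _; case: (j \in S).
Qed.

Theorem theorem4 (n : nat) (v : {set 'I_n} -> bool) (i : 'I_n) :
  (2 <= n)%N -> simple_game v -> ~ dictator v i ->
  PGI v i <= 1 / 2 /\ DP v i <= 1 / 2.
Proof.
move=> _ [[_ [S0 HS0]] mono] ndict.
have v0 : v set0 = false.
  by apply/negbTE/negP => h; move: (mono _ _ (sub0set S0) h); rewrite HS0.
set P := minimal_winning v.
have Pwin S : P S -> v S by case/andP.
have Pne S : P S -> (0 < #|S|)%N.
  move=> /Pwin h; rewrite card_gt0; apply/eqP => e; by rewrite e v0 in h.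
have Pcard2 S : P S -> S != [set i] -> i \in S -> (2 <= #|S|)%N.
  move=> _ Sn iS.
  have pr : [set i] \proper S by rewrite properEneq eq_sym Sn sub1set iS.
  by have := proper_card pr; rewrite cards1.
have exT : P [set i] -> exists2 T, P T & i \notin T.
  move=> Pi; have vi : v [set i] by apply: Pwin.
  case: (boolP [exists j, (j != i) && [exists S : {set 'I_n}, (j \notin S) && (v S != v (j |: S))]]).
    case/existsP => j /andP [ji /existsP [S /andP [jS vS]]].
    have vSf : v S = false.
      apply/negbTE/negP => h; move: vS; rewrite h.
      by rewrite (mono _ _ (subsetUr [set j] S) h).
    have vjS : v (j |: S) by move: vS; rewrite vSf; case: (v (j |: S)).
    have iS : i \notin S.
      apply/negP => iS; have := mono _ S _ vi.
      by rewrite sub1set iS vSf => /(_ isT).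
    have [T mT TS] := minset_exists (P := fun X => v X) vjS.
    exists T.
      move/minsetP: mT => [vT mT]; rewrite /P /minimal_winning vT /=.
      apply/forallP => B; apply/implyP => BT; apply/negP => vB.
      have e := mT B vB (proper_sub BT).
      by rewrite e properE subxx andbF in BT.
    apply/negP => iT; move/subsetP: TS => /(_ _ iT); rewrite !inE.
    by rewrite eq_sym (negbTE ji) (negbTE iS).
  rewrite negb_exists => /forallP hn; exfalso; apply: ndict; split => // j ji S jS.
  move: (hn j); rewrite ji /= negb_exists => /forallP /(_ S).
  by rewrite jS /= negbK => /eqP.
have Tprop : P [set i] -> exists2 T, P T & (T != [set i]) /\ i \notin T.
  move=> Pi; have [T PT iT] := exT Pi; exists T => //; split => //.
  by apply/negP => /eqP e; rewrite e set11 in iT.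
split.
- rewrite /PGI.
  have mE j : (mwc_count v j)%:R = \sum_(S | P S) ((j \in S)%:R : rat).
    by rewrite /mwc_count card_cond natr_sum.
  have tot : ((\sum_(j < n) mwc_count v j)%N%:R : rat) = \sum_(S | P S) (#|S|%:R).
    rewrite natr_sum; under eq_bigr do rewrite mE; rewrite exchange_big /=.
    apply: eq_bigr => S _; rewrite -natr_sum; congr (_%:R).
    exact: sum_in.
  rewrite tot mE.
  have le : \sum_(S | P S) (2 * ((i \in S)%:R : rat)) <= \sum_(S | P S) (#|S|%:R).
    apply: (@key_sum _ _ _ _ [set i]).
      move=> S PS Sn; case iS: (i \in S).
        by rewrite mulr1 ler_nat; apply: Pcard2.
      by rewrite mulr0 ler0n.
    move=> Pi; have [T PT [Tn iT]] := Tprop Pi; exists T => //; split => //.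
    rewrite set11 (negbTE iT) cards1 mulr0 addr0 mulr1.
    have h1 : (1 : rat) <= #|T|%:R by rewrite (ler_nat rat 1); exact: Pne.
    rewrite (_ : (2 : rat) = 1 + 1) //; exact: lerD.
  rewrite -mulr_sumr in le.
  set a := \sum_(S | P S) ((i \in S)%:R : rat) in le *.
  set b := \sum_(S | P S) (#|S|%:R : rat) in le *.
  have a0 : 0 <= a by apply: sumr_ge0 => S _; apply: ler0n.
  case b0: (b == 0).
    by rewrite (eqP b0) invr0 mulr0 divr_ge0.
  have bp : 0 < b by rewrite lt0r b0 /=; apply: le_trans le; apply: mulr_ge0.
  rewrite ler_pdivrMr // mul1r ler_pdivlMl //.
- rewrite /DP.
  have dE j : dp_weight v j = \sum_(S | P S) ((j \in S)%:R * (#|S|%:R)^-1).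
    rewrite /dp_weight big_mkcondr /=; apply: eq_bigr => S _.
    by case: (j \in S); rewrite ?mul1r ?mul0r.
  have tot : \sum_(j < n) dp_weight v j = \sum_(S | P S) (1 : rat).
    under eq_bigr do rewrite dE; rewrite exchange_big /=.
    apply: eq_big => // S PS; rewrite -mulr_suml -natr_sum.
    rewrite sum_in.
    apply: mulfV; rewrite pnatr_eq0 -lt0n; exact: Pne.
  rewrite tot dE.
  have le : \sum_(S | P S) (2 * ((i \in S)%:R * (#|S|%:R)^-1)) <= \sum_(S | P S) (1 : rat).
    apply: (@key_sum _ _ _ _ [set i]).
      move=> S PS Sn; case iS: (i \in S); last by rewrite mul0r mulr0.
      rewrite mul1r; have h2 := Pcard2 S PS Sn iS.
      have sp : (0 : rat) < #|S|%:R by rewrite ltr0n; exact: Pne.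
      rewrite ler_pdivrMr // mul1r ler_nat //.
    move=> Pi; have [T PT [Tn iT]] := Tprop Pi; exists T => //; split => //.
    by rewrite set11 (negbTE iT) cards1 mul0r mulr0 addr0 mul1r invr1 mulr1.
  rewrite -mulr_sumr in le.
  set a := \sum_(S | P S) ((i \in S)%:R * (#|S|%:R)^-1 : rat) in le *.
  set b := \sum_(S | P S) (1 : rat) in le *.
  have a0 : 0 <= a.
    apply: sumr_ge0 => S _; apply: mulr_ge0; first exact: ler0n.
    by rewrite invr_ge0 ler0n.
  case b0: (b == 0).
    by rewrite (eqP b0) invr0 mulr0 divr_ge0.
  have bp : 0 < b by rewrite lt0r b0 /=; apply: le_trans le; apply: mulr_ge0.
  rewrite ler_pdivrMr // mul1r ler_pdivlMl //.
Qed.
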